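(* Let $(X_{1,\infty},f_{1,\infty},\mu_{1,\infty})$ be a metric nonautonomous dynamical system. For $\mathcal{P}_{1,\infty},\mathcal{Q}_{1,\infty}\in\mathcal{E}_{\max}$ let \[ d_R(\mathcal{P}_{1,\infty},\mathcal{Q}_{1,\infty})=\sup_{n\ge1}H_{\mu_n}(\mathcal{P}_n|\mathcal{Q}_n)+\sup_{n\ge1}H_{\mu_n}(\mathcal{Q}_n|\mathcal{P}_n). \] Then $d_R$ is a metric on $\mathcal{E}_{\max}$ and the function $\mathcal{P}_{1,\infty}\mapsto h(f_{1,\infty};\mathcal{P}_{1,\infty})$ is Lipschitz continuous with Lipschitz constant $1$ on $(\mathcal{E}_{\max},d_R)$.
   Context: A metric NDS consists of probability spaces $(X_n,\mathcal{A}_n,\mu_n)$ and measurable maps $f_n:X_n\to X_{n+1}$ with $f_n\mu_n=\mu_{n+1}$. $f_1^n=f_n\circ\cdots\circ f_1$, $f_1^{-n}$ = preimage under $f_1^n$. $H_\mu(\mathcal{P})=-\sum_P\mu(P)\log\mu(P)$; conditional entropy $H_\mu(\mathcal{P}|\mathcal{Q})=-\sum_{Q}\mu(Q)\sum_P\mu(P|Q)\log\mu(P|Q)$ with $\mu(P|Q)=\mu(P\cap Q)/\mu(Q)$. $h(f_{1,\infty};\mathcal{P}_{1,\infty})=\limsup_n\frac1nH_{\mu_1}(\bigvee_{i=0}^{n-1}f_1^{-i}\mathcal{P}_{i+1})$. $\mathcal{E}_{\max}$ is the class of all sequences $\{\mathcal{P}_n\}$ of finite measurable partitions of $X_n$ with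 $\sup_n\#\mathcal{P}_n<\infty$. *)

(* Defs.v *)
From HB Require Import structures.
From mathcomp Require Import all_boot all_order all_algebra.
From mathcomp Require Import all_classical all_reals all_analysis.
Set Implicit Arguments. Unset Strict Implicit. Unset Printing Implicit Defensive.
Import Order.TTheory GRing.Theory Num.Theory.
Local Open Scope classical_set_scope.
Local Open Scope ring_scope.

Section Entropy.
Variables (R : realType) (d : measure_display) (T : measurableType d).

Definition xlogx (x : R) : R := if x == 0 then 0 else x * ln x.

(* finite measurable partition (finiteness is imposed in Emax) *)
Definition is_meas_partition (P : set (set T)) : Prop :=
  (forall A, P A -> measurable A) /\
  (forall A B, P A -> P B -> A <> B -> A `&` B = set0) /\
  (forall x, exists A, P A /\ A x).

Variable mu : probability T R.

Definition entropy (P : set (set T)) : R :=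
  - \sum_(A \in P) xlogx (fine (mu A)).

Definition cond_prob (A B : set T) : R := fine (mu (A `&` B)) / fine (mu B).

Definition cond_entropy (P Q : set (set T)) : R :=
  - \sum_(B \in Q) (fine (mu B) * \sum_(A \in P) xlogx (cond_prob A B)).

Definition refines_mod0 (P Q : set (set T)) : Prop :=
  forall B, Q B -> exists A, P A /\ mu (B `\` A) = 0%E.

Definition equiv_mod0 (P Q : set (set T)) : Prop :=
  refines_mod0 P Q /\ refines_mod0 Q P.
End Entropy.

Definition pre_part (S T : Type) (g : S -> T) (P : set (set T)) : set (set S) :=
  [set g @^-1` A | A in P].

Definition join_part (T : Type) (P Q : set (set T)) : set (set T) :=
  [set C | exists A B, P A /\ Q B /\ C = A `&` B].

(* f_1^n : X_1 -> X_{n+1}  (0-indexed: fiter f n : X 0 -> X n) *)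
Fixpoint fiter (X : nat -> Type) (f : forall n, X n -> X n.+1) (n : nat)
  : X 0 -> X n :=
  match n return X 0 -> X n with
  | 0 => id
  | k.+1 => f k \o fiter f k
  end.

Fixpoint dyn_join (X : nat -> Type) (f : forall n, X n -> X n.+1)
  (P : forall n, set (set (X n))) (n : nat) : set (set (X 0)) :=
  match n with
  | 0 => [set setT]
  | k.+1 => join_part (dyn_join f P k) (pre_part (fiter f k) (P k))
  end.

Section NDS.
Variables (R : realType) (d : nat -> measure_display)
  (X : forall n, measurableType (d n)) (mu : forall n, probability (X n) R)
  (f : forall n, X n -> X n.+1).

Definition Emax (P : forall n, set (set (X n))) : Prop :=
  (forall n, is_meas_partition (P n)) /\
  exists N : nat, forall n, (P n #<= `I_N)%card.

Definition dR (P Q : forall n, set (set (X n))) : R :=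
  sup (range (fun n => cond_entropy (mu n) (P n) (Q n))) +
  sup (range (fun n => cond_entropy (mu n) (Q n) (P n))).

Definition nds_entropy (P : forall n, set (set (X n))) : \bar R :=
  limn_esup (fun n => ((n%:R)^-1 * entropy (mu 0) (dyn_join f P n))%:E).
End NDS.

(* Main.v *)
Require Import Defs.
From HB Require Import structures.
From mathcomp Require Import all_boot all_order all_algebra.
From mathcomp Require Import all_classical all_reals all_analysis.
From mathcomp Require Import ring lra.
Import Order.TTheory GRing.Theory Num.Theory.
Local Open Scope classical_set_scope.
Local Open Scope ring_scope.

Set Implicit Arguments. Unset Strict Implicit. Unset Printing Implicit Defensive.

Section RealPart.
Variable R : realType.
Implicit Types x y a b : R.

Definition phi x y : R := - (y * xlogx (x / y)).

Lemma xlogxE x : xlogx x = x * ln x.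
Proof. by rewrite /xlogx; case: eqP => [->|]; rewrite ?mul0r. Qed.

Lemma ln_le_sub1 a : 0 < a -> ln a <= a - 1.
Proof.
move=> a0; have := @le_ln1Dx R (a - 1); rewrite (addrC 1) subrK; apply.
by rewrite -(ltrD2r 1) subrK addNr.
Qed.

Lemma phiE x y : 0 <= x <= y -> phi x y = x * ln y - x * ln x.
Proof.
case/andP=> x0 xy; rewrite /phi xlogxE.
have [->|xn0] := eqVneq x 0; first by rewrite !(mul0r, mulr0, oppr0, subr0, addr0).
have xp : 0 < x by rewrite lt_def xn0.
have yp : 0 < y by apply: lt_le_trans xy.
rewrite ln_div ?posrE // mulrA mulrCA divff ?gt_eqF // mulr1.
by rewrite mulrBr opprB.
Qed.

Lemma phi0 y : phi 0 y = 0.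
Proof. by rewrite /phi mul0r xlogxE mul0r mulr0 oppr0. Qed.

Lemma phi_ge0 x y : 0 <= x <= y -> 0 <= phi x y.
Proof.
move=> h; rewrite phiE // -mulrBr; case/andP: h => x0 xy.
have [->|xn0] := eqVneq x 0; first by rewrite mul0r.
have xp : 0 < x by rewrite lt_def xn0.
rewrite mulr_ge0 // subr_ge0 ler_ln ?posrE //; exact: lt_le_trans xy.
Qed.

Lemma key_ln a b : 0 < a -> 0 < b -> a * (ln b - ln a) <= b - a.
Proof.
move=> a0 b0; rewrite -ln_div ?posrE //.
have := ln_le_sub1 (divr_gt0 b0 a0) => h.
by have := ler_wpM2l (ltW a0) h; rewrite mulrBr mulr1 mulrCA divff ?gt_eqF // mulr1.
Qed.

Lemma phi_le x y : 0 <= x <= y -> phi x y <= y.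
Proof.
move=> h; rewrite phiE // -mulrBr; case/andP: h => x0 xy.
have [e|xn0] := eqVneq x 0; first by rewrite e mul0r; exact: le_trans x0 xy.
have xp : 0 < x by rewrite lt_def xn0.
have yp : 0 < y by apply: lt_le_trans xy.
apply: le_trans (key_ln xp yp) _; rewrite lerBlDr lerDl //.
Qed.

Lemma phi_eq0 x y : 0 < x -> x <= y -> phi x y = 0 -> x = y.
Proof.
move=> xp xy; have hh : 0 <= x <= y by rewrite (ltW xp) xy.
rewrite phiE // -mulrBr => /eqP; rewrite mulf_eq0 gt_eqF //=.
rewrite subr_eq0 => /eqP e; apply/eqP; rewrite eq_le xy /=.
have yp : 0 < y by apply: lt_le_trans xy.
by rewrite -ler_ln ?posrE // e.
Qed.

Lemma phi_add x1 y1 x2 y2 : 0 <= x1 <= y1 -> 0 <= x2 <= y2 ->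
  phi x1 y1 + phi x2 y2 <= phi (x1 + x2) (y1 + y2).
Proof.
move=> h1 h2; have h12 : 0 <= x1 + x2 <= y1 + y2.
  by case/andP: h1 => ? ?; case/andP: h2 => ? ?; rewrite addr_ge0 ?lerD.
case/andP: (h1) => x10 x1y1; case/andP: (h2) => x20 x2y2.
have [e1|n1] := eqVneq x1 0.
  rewrite e1 phi0 add0r; subst x1; rewrite add0r !phiE // ?x20 ?(le_trans x2y2) ?lerDr ?(le_trans x10 x1y1) //.
  rewrite lerD2r; have [->|n2] := eqVneq x2 0; first by rewrite !mul0r.
  have xp : 0 < x2 by rewrite lt_def n2.
  have yp : 0 < y2 by apply: lt_le_trans x2y2.
  by rewrite ler_wpM2l // ler_ln ?posrE ?lerDr ?(le_trans x10 x1y1) // ltr_wpDl // (le_trans x10 x1y1).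
have [e2|n2] := eqVneq x2 0.
  rewrite e2 phi0 addr0; subst x2; rewrite addr0 !phiE // ?x10 ?(le_trans x1y1) ?lerDl ?(le_trans x20 x2y2) //.
  rewrite lerD2r; have xp : 0 < x1 by rewrite lt_def n1.
  have yp : 0 < y1 by apply: lt_le_trans x1y1.
  by rewrite ler_wpM2l // ler_ln ?posrE ?lerDl ?(le_trans x20 x2y2) // ltr_wpDr // (le_trans x20 x2y2).
have p1 : 0 < x1 by rewrite lt_def n1.
have p2 : 0 < x2 by rewrite lt_def n2.
have q1 : 0 < y1 by apply: lt_le_trans x1y1.
have q2 : 0 < y2 by apply: lt_le_trans x2y2.
set X := x1 + x2; set Y := y1 + y2.
have Xp : 0 < X by rewrite addr_gt0.
have Yp : 0 < Y by rewrite addr_gt0.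
have k1 := key_ln p1 (divr_gt0 (mulr_gt0 q1 Xp) Yp).
have k2 := key_ln p2 (divr_gt0 (mulr_gt0 q2 Xp) Yp).
rewrite !ln_div ?posrE ?mulr_gt0 // !lnM ?posrE // in k1 k2.
rewrite !phiE //.
have := lerD k1 k2.
have -> : y1 * X / Y - x1 + (y2 * X / Y - x2) = 0.
  rewrite addrACA -opprD -/X -mulrDl -mulrDl -/Y mulrAC divff ?gt_eqF // mul1r subrr //.
move=> h.
have -> : x1 * ln y1 - x1 * ln x1 + (x2 * ln y2 - x2 * ln x2) = (X * ln Y - X * ln X) +
  (x1 * (ln y1 + ln X - ln Y - ln x1) + x2 * (ln y2 + ln X - ln Y - ln x2)).
  rewrite /X; ring.
by rewrite gerDl.
Qed.

Lemma phi_sum (I : eqType) (s : seq I) (x y : I -> R) :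
  (forall i, i \in s -> 0 <= x i <= y i) ->
  \sum_(i <- s) phi (x i) (y i) <= phi (\sum_(i <- s) x i) (\sum_(i <- s) y i).
Proof.
elim: s => [|a s IH] h; first by rewrite !big_nil phi0.
rewrite !big_cons.
have ha : 0 <= x a <= y a by apply: h; rewrite inE eqxx.
have hs : forall i, i \in s -> 0 <= x i <= y i by move=> i iis; apply: h; rewrite inE iis orbT.
have hS : 0 <= \sum_(i <- s) x i <= \sum_(i <- s) y i.
  rewrite big_seq sumr_ge0 /=; last by move=> i /hs /andP[].
  by rewrite [X in _ <= X]big_seq ler_sum // => i /hs /andP[].
apply: le_trans (phi_add ha hS); rewrite lerD2l; exact: IH.
Qed.

End RealPart.


Section Gen.
Variable R : realType.

Lemma fsum_le (I : choiceType) (D : set I) (F G : I -> R) : finite_set D ->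
  (forall i, D i -> F i <= G i) -> \sum_(i \in D) F i <= \sum_(i \in D) G i.
Proof.
move=> fD h; rewrite !fsbig_finite // big_seq [X in _ <= X]big_seq.
by apply: ler_sum => i; rewrite in_fset_set // => /set_mem /h.
Qed.

Lemma fsumN (I : choiceType) (D : set I) (F : I -> R) : finite_set D ->
  \sum_(i \in D) - F i = - \sum_(i \in D) F i.
Proof. by move=> fD; rewrite !fsbig_finite // sumrN. Qed.

Lemma fsumB (I : choiceType) (D : set I) (F G : I -> R) : finite_set D ->
  \sum_(i \in D) (F i - G i) = \sum_(i \in D) F i - \sum_(i \in D) G i.
Proof. by move=> fD; rewrite !fsbig_finite // sumrB. Qed.

Lemma phi_fsum (I : choiceType) (D : set I) (x y : I -> R) : finite_set D ->
  (forall i, D i -> 0 <= x i <= y i) ->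
  \sum_(i \in D) phi (x i) (y i) <= phi (\sum_(i \in D) x i) (\sum_(i \in D) y i).
Proof.
move=> fD h; rewrite !fsbig_finite //; apply: phi_sum => i.
by rewrite in_fset_set // => /set_mem /h.
Qed.

End Gen.

Section Meas.
Variables (R : realType) (d : measure_display) (T : measurableType d)
  (mu : probability T R).
Local Notation m A := (fine (mu A)).

Definition fpart (P : set (set T)) := is_meas_partition P /\ finite_set P.

Lemma mu_fin A : measurable A -> mu A \is a fin_num.
Proof. exact: fin_num_measure. Qed.

Lemma m_ge0 A : 0 <= m A.
Proof. exact/fine_ge0/measure_ge0. Qed.

Lemma m_le A B : measurable A -> measurable B -> A `<=` B -> m A <= m B.
Proof.
move=> mA mB AB; apply: fine_le; rewrite ?inE; try exact: mu_fin.
by apply: le_measure; rewrite ?inE.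
Qed.

Lemma m_setT : m setT = 1.
Proof. by rewrite probability_setT. Qed.

Lemma m_set0 : m set0 = 0.
Proof. by rewrite measure0. Qed.

Lemma mE A : measurable A -> mu A = (m A)%:E.
Proof. by move=> mA; rewrite fineK // mu_fin. Qed.

Lemma m_DI A B : measurable A -> measurable B -> m A = m (A `\` B) + m (A `&` B).
Proof.
move=> mA mB; rewrite (measureDI mu mA mB) fineD // mu_fin //.
  exact: measurableD.
exact: measurableI.
Qed.

Lemma part_eq (P : set (set T)) A B x : is_meas_partition P -> P A -> P B ->
  A x -> B x -> A = B.
Proof.
case=> _ [Pd _] PA PB Ax Bx; have [//|ne] := pselect (A = B); exfalso.
have e := Pd A B PA PB ne.
have h : (A `&` B) x := conj Ax Bx.
by rewrite e in h.
Qed.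

Lemma m_additive (P : set (set T)) B : fpart P -> measurable B ->
  \sum_(A \in P) m (A `&` B) = m B.
Proof.
case=> [[Pm [Pd Pc]] Pf] mB.
have eB : B = \bigcup_(A in P) (A `&` B).
  apply/seteqP; split => [x Bx|x [A _ [_ Bx]]] //.
  by have [A [PA Ax]] := Pc x; exists A.
have tr : trivIset P (fun A => A `&` B).
  move=> A A' PA PA' [x [[Ax _] [A'x _]]].
  exact: (part_eq (conj Pm (conj Pd Pc)) PA PA' Ax A'x).
transitivity (fine (\sum_(A \in P) mu (A `&` B)))%E; last first.
  rewrite -(measure_fin_bigcup mu Pf tr) -?eB //.
  by move=> A PA; apply: measurableI => //; exact: Pm.
rewrite fsbig_finite // big_seq sum_fine; last first.
  move=> A; rewrite in_fset_set // => /set_mem PA.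
  by apply: mu_fin; apply: measurableI => //; exact: Pm.
by rewrite fsbig_finite // big_seq.
Qed.

Lemma fsum_img (I : choiceType) (D : set I) (h : I -> set T) (F : set T -> R) :
  F set0 = 0 ->
  (forall i j, D i -> D j -> h i = h j -> h i !=set0 -> i = j) ->
  \sum_(C \in h @` D) F C = \sum_(i \in D) F (h i).
Proof.
move=> F0 hinj.
pose D' := D `&` [set i | h i !=set0].
rewrite -(fsbig_widen (h @` D') (h @` D) F).
- rewrite fsbig_image; last first.
    by move=> i j /set_mem [Di ni] /set_mem [Dj nj] e; exact: hinj.
  apply: fsbig_widen => [i [] //| i [Di]] /=.
  move/not_andP => [//|/set0P/negP]; rewrite negbK => /eqP ->; exact: F0.
- by move=> _ [i [Di _] <-]; exists i.
- move=> _ [[i Di <-] nin] /=.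
  have [e|ne] := eqVneq (h i) set0; first by rewrite e.
  by exfalso; apply: nin; exists i => //; split => //; apply/set0P.
Qed.

Lemma joinE (P Q : set (set T)) :
  join_part P Q = (fun p => p.1 `&` p.2) @` (P `*` Q).
Proof.
apply/seteqP; split => [C [A [B [PA [QB ->]]]]|_ [[A B] [PA QB] <-]].
  by exists (A, B).
by exists A, B.
Qed.

Lemma fsum_join (P Q : set (set T)) (F : set T -> R) : fpart P -> fpart Q ->
  F set0 = 0 ->
  \sum_(C \in join_part P Q) F C = \sum_(A \in P) \sum_(B \in Q) F (A `&` B).
Proof.
move=> [hP fP] [hQ fQ] F0; rewrite joinE fsum_img // ?pair_fsbig //.
move=> [A B] [A' B'] [/= PA QB] [/= PA' QB'] /= e [x [Ax Bx]].
have [A'x B'x] : (A' `&` B') x by rewrite -e.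
by rewrite (part_eq hP PA PA' Ax A'x) (part_eq hQ QB QB' Bx B'x).
Qed.

Lemma CE_E (P Q : set (set T)) : finite_set P -> finite_set Q ->
  cond_entropy mu P Q = \sum_(B \in Q) \sum_(A \in P) phi (m (A `&` B)) (m B).
Proof.
move=> fP fQ; rewrite /cond_entropy -fsumN //; apply: eq_fsbigr => B _.
by rewrite mulr_fsumr -fsumN.
Qed.

Lemma entropy_join (P Q : set (set T)) : fpart P -> fpart Q ->
  entropy mu (join_part P Q) = - \sum_(A \in P) \sum_(B \in Q) xlogx (m (A `&` B)).
Proof.
move=> hP hQ; rewrite /entropy fsum_join //.
by rewrite measure0 fine0 xlogxE mul0r.
Qed.

Lemma CE_join (P Q : set (set T)) : fpart P -> fpart Q ->
  cond_entropy mu P Q = entropy mu (join_part P Q) - entropy mu Q.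
Proof.
move=> hP hQ; case: (hP) => [[Pm _] fP]; case: (hQ) => [[Qm _] fQ].
rewrite CE_E // entropy_join //.
transitivity (\sum_(B \in Q) (xlogx (m B) - \sum_(A \in P) xlogx (m (A `&` B)))).
  apply: eq_fsbigr => B /set_mem QB.
  transitivity (\sum_(A \in P) (m (A `&` B) * ln (m B) - xlogx (m (A `&` B)))).
    apply: eq_fsbigr => A /set_mem PA; rewrite phiE ?xlogxE // m_ge0 /=.
    by apply: m_le; [apply: measurableI; [exact: Pm|exact: Qm]|exact: Qm|apply: subIsetr].
  rewrite fsumB // -mulr_fsuml m_additive ?xlogxE //; exact: Qm.
by rewrite fsumB // [in RHS]exchange_fsbig // /entropy opprK addrC.
Qed.

End Meas.


Lemma join_comm (T : Type) (P Q : set (set T)) : join_part P Q = join_part Q P.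
Proof.
by apply/seteqP; split => C [A [B [PA [QB ->]]]]; exists B, A; rewrite setIC.
Qed.

Lemma join_assoc (T : Type) (P Q S : set (set T)) :
  join_part (join_part P Q) S = join_part P (join_part Q S).
Proof.
apply/seteqP; split => C.
  move=> [_ [D [[A [B [PA [QB ->]]]] [SD ->]]]].
  by exists A, (B `&` D); split => //; split; [exists B, D|rewrite setIA].
move=> [A [_ [PA [[B [D [QB [SD ->]]]] ->]]]].
by exists (A `&` B), D; split; [exists A, B|rewrite setIA].
Qed.

Section Meas2.
Variables (R : realType) (d : measure_display) (T : measurableType d)
  (mu : probability T R).
Local Notation m A := (fine (mu A)).
Local Notation H := (entropy mu).
Implicit Types P Q S : set (set T).
Local Notation CE := (cond_entropy mu).

Lemma join_fpart P Q : fpart P -> fpart Q -> fpart (join_part P Q).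
Proof.
move=> [[Pm [Pd Pc]] fP] [[Qm [Qd Qc]] fQ]; split; last first.
  by rewrite joinE; apply: finite_image; apply: finite_setX.
split; [|split].
- by move=> _ [A [B [PA [QB ->]]]]; apply: measurableI; [exact: Pm|exact: Qm].
- move=> _ _ [A [B [PA [QB ->]]]] [A' [B' [PA' [QB' ->]]]] ne.
  have [eA|nA] := pselect (A = A').
    have [eB|nB] := pselect (B = B'); first by exfalso; apply: ne; rewrite eA eB.
    apply/seteqP; split => x // [[_ Bx] [_ B'x]].
    by have h : (B `&` B') x := conj Bx B'x; rewrite (Qd _ _ QB QB' nB) in h.
  apply/seteqP; split => x // [[Ax _] [A'x _]].
  by have h : (A `&` A') x := conj Ax A'x; rewrite (Pd _ _ PA PA' nA) in h.
- move=> x; have [A [PA Ax]] := Pc x; have [B [QB Bx]] := Qc x.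
  by exists (A `&` B); split => //; exists A, B.
Qed.

Lemma fpart_meas P A : fpart P -> P A -> measurable A.
Proof. by case=> [[Pm _] _]; exact: Pm. Qed.

Lemma fpart_fin P : fpart P -> finite_set P.
Proof. by case. Qed.

Lemma m_I_le A B : measurable A -> measurable B -> 0 <= m (A `&` B) <= m B.
Proof.
move=> mA mB; rewrite m_ge0 /=; apply: m_le => //; exact: measurableI.
Qed.

Lemma CE_ge0 P Q : fpart P -> fpart Q -> 0 <= CE P Q.
Proof.
move=> hP hQ; have fP := fpart_fin hP; have fQ := fpart_fin hQ; rewrite CE_E //.
apply: fsumr_ge0 => B QB; apply: fsumr_ge0 => A PA; apply: phi_ge0.
by apply: m_I_le; [apply: (fpart_meas hP)|apply: (fpart_meas hQ)].
Qed.

Lemma CE_mono P Q S : fpart P -> fpart Q -> fpart S ->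
  CE P (join_part Q S) <= CE P Q.
Proof.
move=> hP hQ hS; have hQS := join_fpart hQ hS.
have fP := fpart_fin hP; have fQ := fpart_fin hQ; have fS := fpart_fin hS.
have fQS := fpart_fin hQS.
rewrite !CE_E // fsum_join //; last first.
  by apply: fsbig1 => A _; rewrite setI0 measure0 fine0 phi0.
apply: fsum_le; first exact: fpart_fin.
move=> B QB; rewrite exchange_fsbig //.
apply: fsum_le; first exact: fpart_fin.
move=> A PA.
have mA := fpart_meas hP PA; have mB := fpart_meas hQ QB.
apply: le_trans (phi_fsum _ _) _; first exact: fpart_fin.
  move=> D SD; rewrite m_I_le //; first by apply: measurableI => //; exact: fpart_meas hS SD.
rewrite le_eqVlt; apply/orP; left; apply/eqP; congr phi.
  rewrite -[RHS](m_additive mu hS (measurableI _ _ mA mB)).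
  by apply: eq_fsbigr => D _; rewrite setIA setIC.
rewrite -[RHS](m_additive mu hS mB).
by apply: eq_fsbigr => D _; rewrite setIC.
Qed.

Lemma CE_mono' P Q S : fpart P -> fpart Q -> fpart S ->
  CE P (join_part Q S) <= CE P S.
Proof. by move=> hP hQ hS; rewrite join_comm; apply: CE_mono. Qed.

Lemma CE_chain P Q S : fpart P -> fpart Q -> fpart S ->
  CE (join_part P Q) S = CE Q S + CE P (join_part Q S).
Proof.
move=> hP hQ hS; have hQS := join_fpart hQ hS; have hPQ := join_fpart hP hQ.
rewrite !CE_join // join_assoc; ring.
Qed.

Lemma CE_triangle P Q S : fpart P -> fpart Q -> fpart S ->
  CE P S <= CE P Q + CE Q S.
Proof.
move=> hP hQ hS.
have h1 : CE P S <= CE (join_part P Q) S.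
  rewrite join_comm CE_chain // lerDl; apply: CE_ge0 => //; exact: join_fpart.
apply: le_trans h1 _; rewrite CE_chain // addrC lerD2r; exact: CE_mono.
Qed.

Lemma CE_subadd P1 P2 Q : fpart P1 -> fpart P2 -> fpart Q ->
  CE (join_part P1 P2) Q <= CE P1 Q + CE P2 Q.
Proof.
move=> h1 h2 hQ; rewrite CE_chain // addrC lerD2r; exact: CE_mono'.
Qed.

Lemma entropy_mono P Q : fpart P -> fpart Q -> H P <= H (join_part P Q).
Proof.
move=> hP hQ; have := CE_ge0 hQ hP; rewrite CE_join // join_comm.
by rewrite subr_ge0.
Qed.

Lemma entropy_CE P : H P = CE P [set setT].
Proof.
rewrite /cond_entropy fsbig_set1 /entropy m_setT mul1r; congr (- _).
by apply: eq_fsbigr => A _; rewrite /cond_prob setIT m_setT divr1.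
Qed.

Lemma trivial_fpart : fpart [set (setT : set T)].
Proof.
split; last exact: finite_set1.
split; [|split].
- by move=> A ->.
- by move=> A B -> ->.
- by move=> x; exists setT.
Qed.

Lemma fsum_const (I : eqType) (s : seq I) (c : R) : \sum_(i <- s) c = c *+ size s.
Proof. by elim: s => [|a s IH]; rewrite ?big_nil ?mulr0n // big_cons IH mulrS. Qed.

Lemma CE_bound P Q (N : nat) : fpart P -> fpart Q -> (P #<= `I_N)%card ->
  CE P Q <= N%:R.
Proof.
move=> hP hQ PN; have fP := fpart_fin hP; have fQ := fpart_fin hQ; rewrite CE_E //.
apply: le_trans (_ : \sum_(B \in Q) m B * N%:R <= _).
  apply: fsum_le; first exact: fpart_fin.
  move=> B QB; apply: le_trans (_ : \sum_(A \in P) m B <= _).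
    apply: fsum_le; first exact: fpart_fin.
    by move=> A PA; apply: phi_le; apply: m_I_le; [apply: (fpart_meas hP)|apply: (fpart_meas hQ)].
  rewrite fsbig_finite // fsum_const -[X in X <= _]mulr_natr.
  by apply: ler_wpM2l; [exact: m_ge0|rewrite ler_nat; exact: geq_card_fset_set].
rewrite -mulr_fsuml.
have -> : \sum_(B \in Q) m B = 1.
  by rewrite -(m_setT mu) -(m_additive mu hQ measurableT); apply: eq_fsbigr => B _; rewrite setIT.
by rewrite mul1r.
Qed.

End Meas2.


Section Meas3.
Variables (R : realType) (d : measure_display) (T : measurableType d)
  (mu : probability T R).
Local Notation m A := (fine (mu A)).
Local Notation CE := (cond_entropy mu).
Implicit Types P Q S : set (set T).

Lemma T_point : exists x : T, True.
Proof.
case: (pselect (exists x : T, True)) => // nx; exfalso.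
have e : (setT : set T) = set0.
  by apply/seteqP; split => x // _; apply: nx; exists x.
have := probability_setT mu; rewrite e measure0 => h.
by have := congr1 fine h; rewrite fine0 /= => /eqP; rewrite eq_sym oner_eq0.
Qed.

Lemma m_eq0 A : measurable A -> m A = 0 -> mu A = 0%E.
Proof. by move=> mA h; rewrite (mE mu mA) h. Qed.

Lemma CE_eq0 P Q : fpart P -> fpart Q -> (CE P Q = 0 <-> refines_mod0 mu P Q).
Proof.
move=> hP hQ; have fP := fpart_fin hP; have fQ := fpart_fin hQ.
case: (hP) => [[Pm [Pd Pc]] _].
split => [h0|ref]; last first.
  rewrite CE_E //; apply: fsbig1 => B QB; have [A0 [PA0 h0]] := ref B QB.
  have mB := fpart_meas hQ QB; have mA0 := Pm _ PA0.
  have mBA0 : m (B `\` A0) = 0 by rewrite h0 fine0.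
  apply: fsbig1 => A PA; have mA := Pm _ PA.
  have [eA|nA] := pselect (A = A0).
    have -> : m (A `&` B) = m B.
      by rewrite (m_DI mu mB mA0) mBA0 add0r setIC eA.
    by rewrite phiE ?subrr // m_ge0 lexx.
  have -> : m (A `&` B) = 0.
    apply/eqP; rewrite eq_le m_ge0 andbT -mBA0; apply: m_le.
    - exact: measurableI.
    - exact: measurableD.
    - move=> x [Ax Bx]; split => // A0x.
      by have h : (A `&` A0) x := conj Ax A0x; rewrite (Pd _ _ PA PA0 nA) in h.
  exact: phi0.
have terms : forall B A, Q B -> P A -> phi (m (A `&` B)) (m B) = 0.
  move=> B A QB PA; move: h0; rewrite CE_E // => h0.
  have := pfsumr_eq0 fQ _ h0 QB.
  have pos : forall B', Q B' -> 0 <= \sum_(A \in P) phi (m (A `&` B')) (m B').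
    move=> B' QB'; apply: fsumr_ge0 => A' PA'; apply: phi_ge0; apply: m_I_le.
      exact: Pm.
    exact: fpart_meas hQ QB'.
  move=> /(_ pos) h1; apply: (pfsumr_eq0 fP _ h1 PA) => A' PA'.
  by apply: phi_ge0; apply: m_I_le; [exact: Pm|exact: fpart_meas hQ QB].
move=> B QB; have mB := fpart_meas hQ QB.
have [mB0|mBn0] := eqVneq (m B) 0.
  have [x _] := T_point; have [A [PA Ax]] := Pc x.
  exists A; split => //; apply: m_eq0; first by apply: measurableD => //; exact: Pm.
  apply/eqP; rewrite eq_le m_ge0 andbT -mB0.
  by apply: m_le; [apply: measurableD => //; exact: Pm|exact: mB|move=> y []].
have mBp : 0 < m B by rewrite lt_def mBn0 m_ge0.
have hs : 0 < \sum_(A \in P) m (A `&` B) by rewrite (m_additive mu hP mB).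
have [A PA Ap] := @fsumr_gt0 R _ [::] P (fun A => m (A `&` B)) hs.
exists A; split => //; apply: m_eq0; first by apply: measurableD => //; exact: Pm.
have e : m (A `&` B) = m B.
  apply: phi_eq0 => //; last exact: terms.
  by case/andP: (m_I_le mu (Pm _ PA) mB).
by have := m_DI mu mB (Pm _ PA); rewrite setIC e => /eqP; rewrite -subr_eq subrr eq_sym => /eqP.
Qed.

End Meas3.

Section Pre.
Variables (R : realType) (d1 d2 : measure_display) (T1 : measurableType d1)
  (T2 : measurableType d2) (mu1 : probability T1 R) (mu2 : probability T2 R)
  (g : T1 -> T2) (mg : measurable_fun setT g)
  (pg : forall A, measurable A -> mu1 (g @^-1` A) = mu2 A).

Lemma pre_fpart (P : set (set T2)) : fpart P -> fpart (pre_part g P).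
Proof.
move=> [[Pm [Pd Pc]] fP]; split; last exact: finite_image.
split; [|split].
- move=> _ [A PA <-]; have := mg measurableT (Pm _ PA); by rewrite setTI.
- move=> _ _ [A PA <-] [A' PA' <-] ne.
  have nA : A <> A' by move=> e; apply: ne; rewrite e.
  by rewrite -preimage_setI (Pd _ _ PA PA' nA) preimage_set0.
- move=> x; have [A [PA Ax]] := Pc (g x).
  by exists (g @^-1` A); split => //; exists A.
Qed.

Lemma CE_pre (P Q : set (set T2)) : fpart P -> fpart Q ->
  cond_entropy mu1 (pre_part g P) (pre_part g Q) = cond_entropy mu2 P Q.
Proof.
move=> hP hQ; have fP := fpart_fin hP; have fQ := fpart_fin hQ.
case: (hP) => [[Pm _] _]; case: (hQ) => [[Qm _] _].
have inj (D : set (set T2)) : fpart D -> forall i j, D i -> D j ->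
    g @^-1` i = g @^-1` j -> g @^-1` i !=set0 -> i = j.
  move=> hD i j Di Dj e [x xi]; have xj : (g @^-1` j) x by rewrite -e.
  exact: (part_eq hD.1 Di Dj xi xj).
rewrite !CE_E //; try exact: finite_image.
rewrite /pre_part fsum_img; last exact: inj.
  apply: eq_fsbigr => B /set_mem QB; rewrite fsum_img; last exact: inj.
    apply: eq_fsbigr => A /set_mem PA.
    by rewrite -preimage_setI !pg //; [exact: Qm|apply: measurableI; [exact: Pm|exact: Qm]].
  by rewrite set0I measure0 fine0 phi0.
by apply: fsbig1 => A _; rewrite setI0 measure0 fine0 phi0.
Qed.

End Pre.


Unset Implicit Arguments. Set Strict Implicit.

Section Dyn.
Variables (R : realType) (d : nat -> measure_display)
  (X : forall n, measurableType (d n)) (mu : forall n, probability (X n) R)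
  (f : forall n, X n -> X n.+1)
  (mf : forall n, measurable_fun setT (f n))
  (push : forall n (A : set (X n.+1)), measurable A ->
     mu n.+1 A = mu n (f n @^-1` A)).

Lemma fiter_meas n : measurable_fun setT (fiter f n).
Proof.
elim: n => [|n IH] /=; first exact: measurable_id.
exact: measurableT_comp (mf n) IH.
Qed.

Lemma fiter_push n (A : set (X n)) : measurable A ->
  mu 0 (fiter f n @^-1` A) = mu n A.
Proof.
elim: n A => [|n IH] A mA //=.
rewrite push // -IH //.
by have := mf n measurableT _ mA; rewrite setTI.
Qed.

Lemma dyn_fpart (P : forall n, set (set (X n))) : (forall n, fpart (P n)) ->
  forall n, fpart (dyn_join f P n).
Proof.
move=> hP; elim=> [|n IH] /=; first exact: trivial_fpart.
apply: join_fpart IH _; apply: pre_fpart (hP n); exact: fiter_meas.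
Qed.

Lemma CE_triv (Y : measurableType (d 0)) (nu : probability Y R) :
  cond_entropy nu [set setT] [set setT] = 0.
Proof.
rewrite -entropy_CE /entropy fsbig_set1 probability_setT /= xlogxE ln1.
by rewrite mulr0 oppr0.
Qed.

Lemma dyn_CE (P Q : forall n, set (set (X n))) (c : R) :
  (forall n, fpart (P n)) -> (forall n, fpart (Q n)) ->
  (forall n, cond_entropy (mu n) (P n) (Q n) <= c) ->
  forall n, cond_entropy (mu 0) (dyn_join f P n) (dyn_join f Q n) <= n%:R * c.
Proof.
move=> hP hQ hc; elim=> [|n IH] /=; first by rewrite CE_triv mul0r.
have hPn := dyn_fpart _ hP n; have hQn := dyn_fpart _ hQ n.
have hP' := pre_fpart (fiter_meas n) (hP n).
have hQ' := pre_fpart (fiter_meas n) (hQ n).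
apply: le_trans (CE_subadd _ _ _ _) _ => //; first exact: join_fpart.
rewrite -addn1 natrD mulrDl mul1r; apply: lerD.
  apply: le_trans (CE_mono _ _ _ _) IH => //.
apply: le_trans (CE_mono' _ _ _ _) _ => //.
by rewrite (CE_pre (fiter_push n)) //; exact: hc.
Qed.

Lemma dyn_H (P Q : forall n, set (set (X n))) (c : R) :
  (forall n, fpart (P n)) -> (forall n, fpart (Q n)) ->
  (forall n, cond_entropy (mu n) (P n) (Q n) <= c) ->
  forall n, entropy (mu 0) (dyn_join f P n) <=
            entropy (mu 0) (dyn_join f Q n) + n%:R * c.
Proof.
move=> hP hQ hc n; have hPn := dyn_fpart _ hP n; have hQn := dyn_fpart _ hQ n.
apply: le_trans (entropy_mono _ hPn hQn) _.
have := CE_join (mu 0) hPn hQn => e.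
have -> : entropy (mu 0) (join_part (dyn_join f P n) (dyn_join f Q n)) =
  entropy (mu 0) (dyn_join f Q n) + cond_entropy (mu 0) (dyn_join f P n) (dyn_join f Q n).
  by rewrite e; ring.
by rewrite lerD2l; apply: dyn_CE.
Qed.

Lemma dyn_triv n : dyn_join f (fun n => [set (setT : set (X n))]) n = [set setT].
Proof.
elim: n => [//|n IH] /=; rewrite IH.
apply/seteqP; split => [C [A [B [-> [[A' -> <-] ->]]]]|C ->] /=.
  by rewrite preimage_setT setIT.
exists setT, setT; split => //; split; last by rewrite setIT.
by exists setT => //; rewrite preimage_setT.
Qed.

Lemma dyn_H_bound (P : forall n, set (set (X n))) (N : nat) :
  (forall n, fpart (P n)) -> (forall n, (P n #<= `I_N)%card) ->
  forall n, 0 <= entropy (mu 0) (dyn_join f P n) <= n%:R * N%:R.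
Proof.
move=> hP PN n; apply/andP; split.
  by rewrite entropy_CE; apply: CE_ge0; [exact: dyn_fpart|exact: trivial_fpart].
have := @dyn_H P (fun n => [set setT]) N%:R hP (fun n => trivial_fpart (X n)).
move=> /(_ _ n); rewrite dyn_triv.
rewrite (_ : entropy (mu 0) [set setT] = 0) ?add0r //; last first.
  by rewrite entropy_CE CE_triv.
apply; move=> k; apply: CE_bound => //; exact: trivial_fpart.
Qed.

End Dyn.


Unset Implicit Arguments. Set Strict Implicit.

Section Lim.
Variable R : realType.
Local Open Scope ereal_scope.

Lemma esup_mono (u v : (\bar R)^nat) : (forall n, u n <= v n) ->
  limn_esup u <= limn_esup v.
Proof.
move=> uv; rewrite /limn_esup !limf_esupE; apply: le_ereal_inf_tmp.
move=> _ [V FV <-]; apply: le_trans (_ : ereal_sup (u @` V) <= _).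
  by apply: ereal_inf_lbound; exists V.
apply: ge_ereal_sup => _ [n Vn <-]; apply: le_trans (uv n) _.
by apply: ereal_sup_ubound; exists n.
Qed.

Lemma esup_cst (K : \bar R) : limn_esup (fun _ : nat => K) = K.
Proof. by have := cvg_limn_einf_sup (cvg_cst K) => -[]. Qed.

Lemma esup_shift (c : R) (u : (\bar R)^nat) :
  limn_esup (fun n => c%:E + u n) = c%:E + limn_esup u.
Proof.
have E (v : (\bar R)^nat) : limn_esup v = - limn_einf (-%E \o v).
  by rewrite limn_einfN oppeK.
rewrite E (E u).
have -> : -%E \o (fun n => c%:E + u n) = (fun n => (- c)%:E + (-%E \o u) n).
  by apply/funext => n /=; rewrite oppeD // EFinN.
by rewrite limn_einf_shift // oppeD // EFinN oppeK.
Qed.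

End Lim.

Section Sup.
Variable R : realType.

Lemma msup_ub (u : nat -> R) K : (forall n, u n <= K) ->
  forall n, u n <= sup (range u).
Proof.
move=> uK n; apply: ub_le_sup; last by exists n.
by exists K => _ [k _ <-].
Qed.

Lemma msup_le (u : nat -> R) c : (forall n, u n <= c) -> sup (range u) <= c.
Proof. by move=> uc; apply: ge_sup; [exists (u 0), 0|move=> _ [k _ <-]]. Qed.

Lemma msup_ge0 (u : nat -> R) K : (forall n, 0 <= u n) -> (forall n, u n <= K) ->
  0 <= sup (range u).
Proof. by move=> u0 uK; apply: le_trans (u0 0) (msup_ub _ _ uK 0). Qed.

Lemma msup_eq0 (u : nat -> R) K : (forall n, 0 <= u n) -> (forall n, u n <= K) ->
  (sup (range u) = 0 <-> forall n, u n = 0).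
Proof.
move=> u0 uK; split => [s0 n|h].
  by apply/eqP; rewrite eq_le u0 andbT -s0; apply: msup_ub _ _ uK n.
apply/eqP; rewrite eq_le (msup_ge0 _ _ u0 uK) andbT; apply: msup_le => n.
by rewrite h.
Qed.

End Sup.


Section Main.
Variables (R : realType) (d : nat -> measure_display)
  (X : forall n, measurableType (d n)) (mu : forall n, probability (X n) R)
  (f : forall n, X n -> X n.+1)
  (mf : forall n, measurable_fun setT (f n))
  (push : forall n (A : set (X n.+1)), measurable A ->
     mu n.+1 A = mu n (f n @^-1` A)).

Set Implicit Arguments. Unset Strict Implicit.
Implicit Types P Q S : forall n, set (set (X n)).

Definition SS (P Q : forall n, set (set (X n))) : R :=
  sup (range (fun n => cond_entropy (mu n) (P n) (Q n))).

Lemma Emax_fpart P : Emax P -> forall n, fpart (P n).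
Proof.
move=> [h [N hN]] n; split; first exact: h.
exact: card_le_finite (hN n) (finite_II N).
Qed.

Lemma CE_K P Q : Emax P -> Emax Q ->
  exists K, forall n, cond_entropy (mu n) (P n) (Q n) <= K.
Proof.
move=> hP hQ; case: (hP) => [_ [N hN]]; exists N%:R => n.
apply: CE_bound; [exact: Emax_fpart|exact: Emax_fpart|exact: hN].
Qed.

Lemma CE_0 P Q : Emax P -> Emax Q ->
  forall n, 0 <= cond_entropy (mu n) (P n) (Q n).
Proof. by move=> hP hQ n; apply: CE_ge0; exact: Emax_fpart. Qed.

Lemma SS_ub P Q : Emax P -> Emax Q ->
  forall n, cond_entropy (mu n) (P n) (Q n) <= SS P Q.
Proof. by move=> hP hQ n; have [K hK] := CE_K hP hQ; exact: msup_ub _ _ _ hK n. Qed.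

Lemma SS_ge0 P Q : Emax P -> Emax Q -> 0 <= SS P Q.
Proof.
by move=> hP hQ; have [K hK] := CE_K hP hQ; exact: msup_ge0 _ _ _ (CE_0 hP hQ) hK.
Qed.

Lemma SS_eq0 P Q : Emax P -> Emax Q ->
  (SS P Q = 0 <-> forall n, refines_mod0 (mu n) (P n) (Q n)).
Proof.
move=> hP hQ; have [K hK] := CE_K hP hQ.
rewrite /SS (msup_eq0 _ _ _ (CE_0 hP hQ) hK); split => h n.
  by apply/CE_eq0; [exact: Emax_fpart|exact: Emax_fpart|exact: h].
by apply/CE_eq0; [exact: Emax_fpart|exact: Emax_fpart|exact: h].
Qed.

Lemma SS_tri P Q S : Emax P -> Emax Q -> Emax S -> SS P S <= SS P Q + SS Q S.
Proof.
move=> hP hQ hS; apply: msup_le => n.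
apply: le_trans (CE_triangle (mu n) (Emax_fpart hP n) (Emax_fpart hQ n) (Emax_fpart hS n)) _.
by apply: lerD; apply: SS_ub.
Qed.

Definition aa (P : forall n, set (set (X n))) (n : nat) : R :=
  (n%:R)^-1 * entropy (mu 0) (dyn_join f P n).

Lemma aa_bound P : Emax P -> exists N : nat, forall n, 0 <= aa P n <= N%:R.
Proof.
move=> hP; case: (hP) => [_ [N hN]]; exists N => n.
have /andP[h0 h1] := @dyn_H_bound _ _ _ mu f mf push P N (Emax_fpart hP) hN n.
rewrite /aa; case: n h0 h1 => [|n] h0 h1; first by rewrite invr0 mul0r lexx ler0n.
rewrite mulr_ge0 ?invr_ge0 ?ler0n //=.
apply: le_trans (ler_wpM2l _ h1) _; first by rewrite invr_ge0 ler0n.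
by rewrite mulrA mulVf ?pnatr_eq0 // mul1r.
Qed.

Lemma aa_lip P Q : Emax P -> Emax Q -> forall n, aa P n <= SS P Q + aa Q n.
Proof.
move=> hP hQ n.
have h := @dyn_H _ _ _ mu f mf push P Q (SS P Q) (Emax_fpart hP) (Emax_fpart hQ) (SS_ub hP hQ) n.
rewrite /aa; case: n h => [|n] h; first by rewrite invr0 !mul0r addr0 SS_ge0.
apply: le_trans (ler_wpM2l _ h) _; first by rewrite invr_ge0 ler0n.
by rewrite mulrDr mulrA mulVf ?pnatr_eq0 // mul1r addrC.
Qed.

Lemma h_fin P : Emax P -> exists x : R, nds_entropy mu f P = x%:E.
Proof.
move=> hP; have [N hN] := aa_bound hP.
set h := nds_entropy mu f P.
have h0 : ((0:R)%:E <= h)%E.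
  rewrite -(@esup_cst _ (0%:E)); apply: esup_mono => n /=.
  by rewrite lee_fin; case/andP: (hN n).
have h1 : (h <= N%:R%:E)%E.
  rewrite -(@esup_cst _ (N%:R%:E)); apply: esup_mono => n /=.
  by rewrite lee_fin; case/andP: (hN n).
exists (fine h); rewrite fineK // ge0_fin_numE //.
by apply: le_lt_trans h1 _; exact: ltey.
Qed.

Lemma h_le P Q : Emax P -> Emax Q ->
  (nds_entropy mu f P <= (SS P Q)%:E + nds_entropy mu f Q)%E.
Proof.
move=> hP hQ; rewrite /nds_entropy -esup_shift; apply: esup_mono => n.
by rewrite -EFinD lee_fin; apply: aa_lip.
Qed.

End Main.


Unset Implicit Arguments. Set Strict Implicit.

Theorem mainTheorem4 (R : realType) (d : nat -> measure_display)
  (X : forall n, measurableType (d n)) (mu : forall n, probability (X n) R)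
  (f : forall n, X n -> X n.+1)
  (mf : forall n, measurable_fun setT (f n))
  (push : forall n (A : set (X n.+1)), measurable A ->
     mu n.+1 A = mu n (f n @^-1` A)) :
  (* d_R is a metric on E_max (elements identified modulo null sets) *)
  (forall P, Emax P -> dR mu P P = 0) /\
  (forall P Q, Emax P -> Emax Q ->
     0 <= dR mu P Q /\ dR mu P Q = dR mu Q P /\
     (dR mu P Q = 0 <-> forall n, equiv_mod0 (mu n) (P n) (Q n))) /\
  (forall P Q S, Emax P -> Emax Q -> Emax S ->
     dR mu P S <= dR mu P Q + dR mu Q S) /\
  (* h is 1-Lipschitz on (E_max, d_R) *)
  (forall P Q, Emax P -> Emax Q ->
     (`| nds_entropy mu f P - nds_entropy mu f Q | <= (dR mu P Q)%:E)%E).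
Proof.
have dRE P Q : dR mu P Q = SS mu P Q + SS mu Q P by [].
split; [|split; [|split]].
- move=> P hP; rewrite dRE.
  have -> : SS mu P P = 0.
    apply/(SS_eq0 mu hP hP) => n B PB; exists B; split => //.
    by rewrite setDv measure0.
  by rewrite addr0.
- move=> P Q hP hQ; rewrite !dRE; split; first by rewrite addr_ge0 // SS_ge0.
  split; first by rewrite addrC.
  split => [/eqP|h].
    rewrite paddr_eq0 ?SS_ge0 // => /andP[/eqP h1 /eqP h2] n.
    by split; [exact: (proj1 (SS_eq0 mu hP hQ) h1)|exact: (proj1 (SS_eq0 mu hQ hP) h2)].
  have -> : SS mu P Q = 0 by apply/(SS_eq0 mu hP hQ) => n; case: (h n).
  have -> : SS mu Q P = 0 by apply/(SS_eq0 mu hQ hP) => n; case: (h n).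
  by rewrite addr0.
- move=> P Q S hP hQ hS; rewrite !dRE.
  have t1 := SS_tri mu hP hQ hS; have t2 := SS_tri mu hS hQ hP.
  apply: le_trans (lerD t1 t2) _.
  by rewrite le_eqVlt; apply/orP; left; apply/eqP; ring.
- move=> P Q hP hQ; rewrite dRE.
  have [x ex] := h_fin mf push hP; have [y ey] := h_fin mf push hQ.
  have l1 := h_le mf push hP hQ; have l2 := h_le mf push hQ hP.
  rewrite ex ey -!EFinD lee_fin in l1 l2.
  rewrite ex ey -EFinB abse_EFin lee_fin ler_norml.
  have s1 := SS_ge0 mu hP hQ; have s2 := SS_ge0 mu hQ hP.
  rewrite lee_fin in l2.
  apply/andP; split; lra.
Qed.
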